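(* Let $V$ be a nonzero finite-dimensional complex vector space with a norm $\lVert\cdot\rVert$, and let $G\le\mathrm U(V)$ be a finite group. Let $M=\{x\in G : \lVert \mathrm{id}_V-x\rVert_{\mathrm{op}}<1/2\}$ and let $A$ be the subgroup of $G$ generated by $M$. Then $A$ is an abelian normal subgroup of $G$.
   Context: $\mathrm U(V)$ denotes the group of linear isometries of $V$, i.e. the set of $x\in\mathrm{GL}(V)$ with $\lVert xv\rVert=\lVert v\rVert$ for all $v\in V$. For $a\in\mathrm{End}(V)$, the operator norm is $\lVert a\rVert_{\mathrm{op}}=\max\{\lVert av\rVert : v\in V,\ \lVert v\rVert=1\}$. *)

(* Defs.v *)
From HB Require Import structures.
From mathcomp Require Import all_boot all_order all_algebra.
From mathcomp Require Import complex.
From mathcomp Require Import classical_sets reals.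
Set Implicit Arguments. Unset Strict Implicit. Unset Printing Implicit Defensive.
Import Order.TTheory GRing.Theory Num.Theory.
Local Open Scope ring_scope.
Local Open Scope classical_set_scope.

(* V = C^n (row vectors), n >= 1 written n.+1; C = R[i] with R : realType.
   Linear endomorphisms of V are matrices acting on the right: v |-> v *m a. *)

Definition is_norm (R : realType) (n : nat) (N : 'rV[R[i]]_n -> R) : Prop :=
  [/\ forall v, 0 <= N v,
      forall v, N v = 0 -> v = 0,
      forall (a : R[i]) v, N (a *: v) = Normc.normc a * N v
    & forall u v, N (u + v) <= N u + N v].

Definition opnorm (R : realType) (n : nat) (N : 'rV[R[i]]_n -> R)
  (a : 'M[R[i]]_n) : R :=
  sup [set N (v *m a) | v in [set v | N v = 1]].

Definition is_isometry (R : realType) (n : nat) (N : 'rV[R[i]]_n -> R)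
  (x : 'M[R[i]]_n) : Prop :=
  x \in unitmx /\ forall v, N (v *m x) = N v.

Definition is_subgroup_GL (R : realType) (n : nat) (G : 'M[R[i]]_n -> Prop)
  : Prop :=
  [/\ G 1%:M,
      forall x, G x -> x \in unitmx,
      forall x y, G x -> G y -> G (x *m y)
    & forall x, G x -> G (invmx x)].

Definition generated (R : realType) (n : nat) (M : 'M[R[i]]_n -> Prop)
  : 'M[R[i]]_n -> Prop :=
  fun x => forall H, is_subgroup_GL H -> (forall y, M y -> H y) -> H x.

(* Main.v *)
Require Import Defs.
From HB Require Import structures.
From mathcomp Require Import all_boot all_order all_algebra.
From mathcomp Require Import complex.
From mathcomp Require Import classical_sets reals ring lra.
Import Order.TTheory GRing.Theory Num.Theory.
Local Open Scope ring_scope.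


Definition rC {R : realType} (r : R) : R[i] := (r%:C)%C.

Lemma normc_real (R : realType) (r : R) : 0 <= r -> Normc.normc (rC r) = r.
Proof. move=> r0; rewrite /Normc.normc /= expr0n /= addr0 sqrtr_sqr ger0_norm //. Qed.

Lemma N0 {R : realType} {n : nat} {N : 'rV[R[i]]_n -> R} : is_norm N -> N 0 = 0.
Proof. case=> _ _ hs _. by rewrite -(scale0r (0 : 'rV[R[i]]_n)) hs Normc.normc0 mul0r. Qed.

Local Open Scope classical_set_scope.
Lemma opnorm_spec (R : realType) (n : nat) (N : 'rV[R[i]]_n.+1 -> R) (M : 'M[R[i]]_n.+1) (C : R) :
  is_norm N -> (forall v, N (v *m M) <= C * N v) ->
  (forall v, N (v *m M) <= opnorm N M * N v) /\ opnorm N M <= C.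
Proof.
move=> hN hC; have [h0 h1 hs ht] := hN.
set S := [set N (v *m M) | v in [set v | N v = 1]].
have unit v : N v != 0 -> N (rC (N v)^-1 *: v) = 1.
  by move=> nv; rewrite hs normc_real ?invr_ge0 // mulVf.
have e0 : N (const_mx 1) != 0.
  apply/eqP => /h1 /matrixP /(_ ord0 ord0); rewrite !mxE => /eqP; by rewrite oner_eq0.
have Sne : S !=set0 by eexists; exists (rC (N (const_mx 1))^-1 *: const_mx 1); [exact: unit|].
have Sub : ubound S C.
  move=> _ [v /= nv1 <-]; by rewrite -[C]mulr1 -nv1.
have hS : has_sup S by split=> //; exists C.
split; last exact: ge_sup.
move=> v; have [nv0|nv0] := eqVneq (N v) 0.
  by rewrite (h1 _ nv0) mul0mx (N0 hN) mulr0.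
have vp : 0 < N v by rewrite lt0r nv0 h0.
have H : S (N ((rC (N v)^-1 *: v) *m M)) by exists (rC (N v)^-1 *: v); [exact: unit|].
have := sup_upper_bound hS H.
rewrite -scalemxAl hs normc_real ?invr_ge0 //.
have -> : opnorm N M = sup S by [].
by rewrite ler_pdivrMl // mulrC.
Qed.

Local Close Scope classical_set_scope.



Definition bnd {R : realType} {n : nat} (N : 'rV[R[i]]_n -> R) (M : 'M[R[i]]_n) (r : R) :=
  forall v, N (v *m M) <= r * N v.

Lemma normcN1 (R : realType) : Normc.normc (-1 : R[i]) = 1.
Proof. by rewrite /Normc.normc /= oppr0 expr0n /= addr0 sqrrN expr1n sqrtr1. Qed.

Lemma NN {R : realType} {n : nat} {N : 'rV[R[i]]_n -> R} : is_norm N -> forall w, N (- w) = N w.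
Proof. case=> _ _ hs _ w. by rewrite -scaleN1r hs normcN1 mul1r. Qed.

Lemma bnd_isor {R : realType} {n : nat} {N : 'rV[R[i]]_n -> R} M (r : R) g :
  is_isometry N g -> bnd N M r -> bnd N (M *m g) r.
Proof. by move=> [_ hg] hM v; rewrite mulmxA hg. Qed.

Lemma bnd_isol {R : realType} {n : nat} {N : 'rV[R[i]]_n -> R} M (r : R) g :
  is_isometry N g -> bnd N M r -> bnd N (g *m M) r.
Proof. by move=> [_ hg] hM v; rewrite mulmxA -(hg v). Qed.

Lemma bnd_add {R : realType} {n : nat} {N : 'rV[R[i]]_n -> R} M M' (r r' : R) :
  is_norm N -> bnd N M r -> bnd N M' r' -> bnd N (M + M') (r + r').
Proof.
move=> [_ _ _ ht] h h' v; rewrite mulmxDr mulrDl.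
by apply: le_trans (ht _ _) _; apply: lerD.
Qed.

Lemma bnd_opp {R : realType} {n : nat} {N : 'rV[R[i]]_n -> R} M (r : R) :
  is_norm N -> bnd N M r -> bnd N (- M) r.
Proof. by move=> hN h v; rewrite mulmxN (NN hN). Qed.

Lemma bnd_sub {R : realType} {n : nat} {N : 'rV[R[i]]_n -> R} M M' (r r' : R) :
  is_norm N -> bnd N M r -> bnd N M' r' -> bnd N (M - M') (r + r').
Proof. by move=> hN h h'; apply: bnd_add => //; apply: bnd_opp. Qed.

Lemma bnd_mul {R : realType} {n : nat} {N : 'rV[R[i]]_n -> R} M M' (r r' : R) :
  0 <= r' -> bnd N M r -> bnd N M' r' -> bnd N (M *m M') (r * r').
Proof.
move=> r0 h h' v; rewrite mulmxA; apply: le_trans (h' _) _.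
rewrite (mulrC r) -mulrA; exact: ler_wpM2l.
Qed.

Lemma bnd_le {R : realType} {n : nat} {N : 'rV[R[i]]_n -> R} M (r r' : R) :
  is_norm N -> r <= r' -> bnd N M r -> bnd N M r'.
Proof. by move=> [h0 _ _ _] rr h v; apply: le_trans (h v) _; rewrite ler_wpM2r. Qed.

Lemma bnd_zero {R : realType} {n : nat} {N : 'rV[R[i]]_n -> R} M :
  is_norm N -> bnd N M 0 -> M = 0.
Proof.
move=> [h0 h1 _ _] h; apply/row_matrixP => i; rewrite rowE row0.
apply: h1; apply/le_anti; rewrite h0 andbT; by have := h (delta_mx 0 i); rewrite mul0r.
Qed.

Lemma bnd_iso1 {R : realType} {n : nat} {N : 'rV[R[i]]_n -> R} g :
  is_norm N -> is_isometry N g -> bnd N (1%:M - g) 2.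
Proof.
move=> hN hg; rewrite -[2]/(1 + 1).
apply: bnd_sub => // v; first by rewrite mulmx1 mul1r.
by case: hg => _ ->; rewrite mul1r.
Qed.



Lemma bnd_opnorm {R : realType} {n : nat} {N : 'rV[R[i]]_n.+1 -> R} M (C : R) :
  is_norm N -> bnd N M C -> bnd N M (opnorm N M) /\ opnorm N M <= C /\ 0 <= opnorm N M.
Proof.
move=> hN hC; have [h1 h2] := opnorm_spec _ _ _ _ _ hN hC; split=> //; split=> //.
have [h0 hz _ _] := hN.
have e0 : N (const_mx 1) != 0.
  apply/eqP => /hz /matrixP /(_ ord0 ord0); rewrite !mxE => /eqP; by rewrite oner_eq0.
have ep : 0 < N (const_mx 1) by rewrite lt0r e0 h0.
by rewrite -(pmulr_lge0 _ ep); apply: le_trans (h1 _); apply: h0.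
Qed.

Lemma rC_nat (R : realType) (q : nat) : rC (q%:R : R) = q%:R.
Proof. by rewrite /rC rmorph_nat. Qed.

Lemma natC_neq0 (R : realType) (q : nat) : (0 < q)%N -> (q%:R : R[i]) != 0.
Proof.
move=> q0; rewrite -rC_nat; apply/eqP => h.
have := normc_real _ _ (ler0n R q); rewrite h Normc.normc0 => /eqP.
by rewrite eq_sym pnatr_eq0; move: q0; case: (q) => //.
Qed.

Lemma N_natmul {R : realType} {n : nat} {N : 'rV[R[i]]_n -> R} w (q : nat) :
  is_norm N -> N (w *+ q) = q%:R * N w.
Proof. by case=> _ _ hs _; rewrite -scaler_nat hs -rC_nat normc_real ?ler0n. Qed.

Lemma bnd_sum {R : realType} {n : nat} {N : 'rV[R[i]]_n -> R} (F : nat -> 'M[R[i]]_n) (r : R) (q : nat) :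
  is_norm N -> (forall k, bnd N (F k) r) -> bnd N (\sum_(k < q) F k) (q%:R * r).
Proof.
move=> hN hF; elim: q => [|q IH].
  by move=> v; rewrite big_ord0 mulmx0 (N0 hN) !mul0r.
rewrite big_ord_recr /= -addn1 natrD mulrDl mul1r.
exact: bnd_add.
Qed.



Lemma G_pow {R : realType} {n : nat} (G : seq 'M[R[i]]_n.+1) x k :
  is_subgroup_GL (fun x => x \in G) -> x \in G -> x ^+ k \in G.
Proof.
move=> [h1 _ hm _] hx; elim: k => [|k IH]; first by rewrite expr0.
by rewrite exprS; apply: hm.
Qed.

Lemma G_ord {R : realType} {n : nat} (G : seq 'M[R[i]]_n.+1) x :
  is_subgroup_GL (fun x => x \in G) -> x \in G -> exists q, (0 < q)%N /\ x ^+ q = 1.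
Proof.
move=> hG hx; have [_ hu _ _] := hG.
set s := mkseq (fun k => x ^+ k) (size G).+1.
have sub : {subset s <= G}.
  by move=> z /mapP [k _ ->]; apply: G_pow.
have nu : ~~ uniq s.
  apply/negP => us; have := uniq_leq_size us sub; by rewrite size_mkseq ltnn.
have [i [j [ij js eq]]] := uniqPn 0 nu.
rewrite size_mkseq in js.
rewrite !nth_mkseq in eq => //; last exact: ltn_trans js.
exists (j - i)%N; split; first by rewrite subn_gt0.
have xu : x ^+ i \is a GRing.unit by rewrite unitrX //; apply: hu.
apply: (mulrI xu); rewrite -exprD subnKC ?mulr1 //; exact: ltnW.
Qed.

Lemma comm_key {R : realType} {n : nat} (N : 'rV[R[i]]_n.+1 -> R) (G : seq 'M[R[i]]_n.+1) x y d :
  is_norm N -> is_subgroup_GL (fun x => x \in G) -> (forall x, x \in G -> is_isometry N x) ->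
  x \in G -> y \in G -> d \in G -> opnorm N (1%:M - x) < 1 / 2 ->
  d * y = y * d -> y * x = d * x * y -> d = 1.
Proof.
move=> hN hG hI xG yG dG ax dy yx.
have [h1 hu hm hv] := hG.
set a := opnorm N (1%:M - x) in ax.
have [hx [_ a0]] := bnd_opnorm _ _ hN (bnd_iso1 _ hN (hI x xG)).
rewrite -/a in hx a0.
have pk k : y ^+ k * x = d ^+ k * x * y ^+ k.
  elim: k => [|k IH]; first by rewrite !expr0 mul1r mulr1.
  by rewrite exprS -mulrA IH !mulrA (commrX k (esym dy)) -(mulrA _ y x) yx exprSr !mulrA.
have bk k : bnd N (d ^+ k - 1) (a + a).
  have iso : is_isometry N (x * y ^+ k) by apply: hI; apply: hm => //; apply: G_pow.
  have e : (d ^+ k - 1) * (x * y ^+ k) = (1%:M - x) * y ^+ k - y ^+ k * (1%:M - x).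
    rewrite mulrBl mul1r mulrA -pk !mulrBl !mulrBr !mul1r !mulr1.
    by rewrite opprB addrC addrA addrAC [_ - _ - _]addrAC subrr add0r.
  have hb : bnd N ((d ^+ k - 1) * (x * y ^+ k)) (a + a).
    rewrite e; apply: bnd_sub => //.
      by apply: bnd_isor => //; apply: hI; apply: G_pow.
    by apply: bnd_isol => //; apply: hI; apply: G_pow.
  move=> v; have := hb v; by case: iso => _ hiso; rewrite -mulmxE mulmxA hiso.
have [q [q0 dq]] := G_ord _ _ hG dG.
case: q q0 dq => [//|q'] _ dq.
pose S := \sum_(k < q'.+1) d ^+ k.
have dS : d * S = S.
  rewrite /S mulr_sumr; under eq_bigr do rewrite -exprS.
  rewrite big_ord_recr big_ord_recl /= dq expr0 addrC; congr (_ + _).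
have dkS k : d ^+ k * S = S.
  elim: k => [|k IH]; first by rewrite expr0 mul1r.
  by rewrite exprSr -mulrA dS.
have SS : S * S = S *+ q'.+1.
  rewrite {1}/S mulr_suml; under eq_bigr do rewrite dkS.
  by rewrite sumr_const card_ord.
pose E := (q'.+1)%:R - S.
have ES : E * S = 0 by rewrite mulrBl mulr_natl SS subrr.
have EE : E * E = E *+ q'.+1 by rewrite {2}/E mulrBr ES subr0 mulr_natr.
have Esum : E = \sum_(k < q'.+1) (1 - d ^+ k) by rewrite sumrB sumr_const card_ord.
have bE : bnd N E ((q'.+1)%:R * (a + a)).
  rewrite Esum; apply: (bnd_sum (fun k => 1 - d ^+ k)) => // k; rewrite -opprB; exact: bnd_opp.
have E0 : bnd N E 0.
  move=> v; rewrite mul0r.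
  have h := bE (v *m E).
  have EEm : E *m E = E *+ q'.+1 := EE.
  have e : v *m E *m E = (v *m E) *+ q'.+1.
    by rewrite -mulmxA EEm -scaler_nat -scalemxAr scaler_nat.
  rewrite e (N_natmul _ _ hN) -mulrA ler_pM2l ?ltr0Sn // in h.
  have : (1 - (a + a)) * N (v *m E) <= 0 by rewrite mulrBl mul1r subr_le0.
  rewrite pmulr_rle0 //; lra.
have E00 := bnd_zero _ hN E0.
have SE : S = (q'.+1)%:R by apply/esym/subr0_eq.
apply: (scalerI (natC_neq0 _ _ (ltn0Sn q'))); rewrite !scaler_nat.
by rewrite -mulr_natr -SE dS SE.
Qed.



Lemma zid (V : zmodType) (o x y p q : V) : (o - x - (y - p)) - (o - y - (x - q)) = p - q.
Proof.
rewrite !opprB ?opprD ?opprK !addrA.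
rewrite [o - x + p]addrAC [o + p - x - y]addrAC subrK [o + p - y - q]addrAC subrK [o + p]addrC [p + o - q - o]addrAC addrK.
by [].
Qed.

Lemma comm_bnd {R : realType} {n : nat} (N : 'rV[R[i]]_n.+1 -> R) (G : seq 'M[R[i]]_n.+1) x y :
  is_norm N -> is_subgroup_GL (fun x => x \in G) -> (forall x, x \in G -> is_isometry N x) ->
  x \in G -> y \in G ->
  [/\ x * y * x^-1 * y^-1 \in G, x * y * x^-1 * y^-1 * y * x = x * y &
     opnorm N (1%:M - x * y * x^-1 * y^-1) <=
       opnorm N (1%:M - x) * opnorm N (1%:M - y) + opnorm N (1%:M - y) * opnorm N (1%:M - x)].
Proof.
move=> hN hG hI xG yG; have [h1 hu hm hv] := hG.
have xiG : x^-1 \in G by exact: hv.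
have yiG : y^-1 \in G by exact: hv.
have cG : x * y * x^-1 * y^-1 \in G by exact: (hm _ _ (hm _ _ (hm _ _ xG yG) xiG) yiG).
have ce : x * y * x^-1 * y^-1 * y * x = x * y.
  by rewrite mulrVK ?mulrVK //; apply: hu.
split => //.
have [hx [_ ax0]] := bnd_opnorm _ _ hN (bnd_iso1 _ hN (hI x xG)).
have [hy [_ ay0]] := bnd_opnorm _ _ hN (bnd_iso1 _ hN (hI y yG)).
set c := x * y * x^-1 * y^-1 in cG ce *.
have e : (1%:M - c) * (y * x) = (1%:M - y) * (1%:M - x) - (1%:M - x) * (1%:M - y).
  rewrite mulrBl mul1r mulrA ce !mulrBl !mulrBr !mul1r !mulr1.
  by rewrite zid.
have hb : bnd N ((1%:M - c) * (y * x)) (opnorm N (1%:M - x) * opnorm N (1%:M - y) + opnorm N (1%:M - y) * opnorm N (1%:M - x)).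
  rewrite e; apply: bnd_sub => //.
    by rewrite mulrC; apply: bnd_mul.
  by rewrite mulrC; apply: bnd_mul.
have hc : bnd N (1%:M - c) (opnorm N (1%:M - x) * opnorm N (1%:M - y) + opnorm N (1%:M - y) * opnorm N (1%:M - x)).
  move=> v; have := hb v.
  have iso : is_isometry N (y * x) by apply: hI; apply: hm.
  by case: iso => _ hiso; rewrite -[(1%:M - c) * (y * x)]/((1%:M - c) *m (y * x)) mulmxA hiso.
by have [_ [h _]] := bnd_opnorm _ _ hN hc.
Qed.



Lemma count_lt (T : eqType) (p q : pred T) (s : seq T) z0 :
  (forall z, p z -> q z) -> z0 \in s -> q z0 -> ~~ p z0 -> (count p s < count q s)%N.
Proof.
move=> pq; elim: s => [//|z s IH]; rewrite inE => /orP [/eqP <-|zs] qz pz /=.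
  rewrite (negbTE pz) qz add0n add1n ltnS; exact: sub_count.
have := IH zs qz pz; case: (boolP (p z)) => pz'; first by rewrite (pq _ pz') /= !add1n ltnS.
by rewrite add0n => h; apply: leq_trans h _; apply: leq_addl.
Qed.

Lemma commM {R : realType} {n : nat} (N : 'rV[R[i]]_n.+1 -> R) (G : seq 'M[R[i]]_n.+1) :
  is_norm N -> is_subgroup_GL (fun x => x \in G) -> (forall x, x \in G -> is_isometry N x) ->
  forall x y, x \in G -> y \in G -> opnorm N (1%:M - x) < 1 / 2 -> opnorm N (1%:M - y) < 1 / 2 ->
  x * y = y * x.
Proof.
move=> hN hG hI; have [h1 hu hm hv] := hG.
pose a z := opnorm N (1%:M - z).
have a0 z : z \in G -> 0 <= a z.
  by move=> zG; have [_ [_ ->]] := bnd_opnorm _ _ hN (bnd_iso1 _ hN (hI z zG)).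
pose s := [seq (u, w) | u <- G, w <- G].
pose m x y := count (fun p : 'M[R[i]]_n.+1 * 'M[R[i]]_n.+1 => a p.1 + a p.2 < a x + a y) s.
suff H : forall k x y, (m x y < k)%N -> x \in G -> y \in G -> a x < 1 / 2 -> a y < 1 / 2 -> x * y = y * x.
  by move=> x y; apply: (H (m x y).+1).
elim=> [//|k IH] x y hk xG yG ax ay.
have IH' : forall x' y', x' \in G -> y' \in G -> a x' + a y' < a x + a y ->
    a x' < 1 / 2 -> a y' < 1 / 2 -> x' * y' = y' * x'.
  move=> x' y' x'G y'G lt; apply: IH => //.
  rewrite -ltnS; apply: leq_trans hk; rewrite ltnS.
  apply: (@count_lt _ _ _ _ (x', y')).
  - by move=> z /= h; apply: lt_trans h lt.
  - by apply: allpairs_f.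
  - by [].
  - by rewrite /= ltxx.
have [ax0|axp] := eqVneq (a x) 0.
  have [hx _] := bnd_opnorm _ _ hN (bnd_iso1 _ hN (hI x xG)).
  rewrite -/(a x) ax0 in hx.
  have := bnd_zero _ hN hx => /subr0_eq <-.
  by rewrite idmxE mul1r mulr1.
have axp' : 0 < a x by rewrite lt0r axp a0.
have [cG ce cb] := comm_bnd N G x y hN hG hI xG yG.
set c := x * y * x^-1 * y^-1 in cG ce cb; clearbody c.
have ay0 := a0 y yG.
have acx : a c < a x.
  apply: le_lt_trans cb _; rewrite -/(a x) -/(a y).
  nra.
have cy : c * y = y * c.
  apply: IH' => //; [by rewrite ltrD2r | lra].
have cu : c \is a GRing.unit by apply: hu.
have dy : c^-1 * y = y * c^-1 by apply/esym/commrV.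
have yx : y * x = c^-1 * x * y.
  by rewrite -!mulrA -ce -!mulrA mulKr.
have d1 := comm_key N G x y (c^-1) hN hG hI xG yG (hv _ cG) ax dy yx.
have c1 : c = 1 by apply/eqP; rewrite -invr_eq1 d1.
by move: ce; rewrite c1 mul1r => ->.
Qed.



Lemma cent_sub {R : realType} {n : nat} (T : 'M[R[i]]_n.+1 -> Prop) :
  is_subgroup_GL (fun z => z \in unitmx /\ forall w, T w -> z *m w = w *m z).
Proof.
split.
- by split; [exact: unitmx1 | move=> w _; rewrite mul1mx mulmx1].
- by move=> x [].
- move=> x y [xu hx] [yu hy]; split; first by rewrite unitmx_mul xu.
  by move=> w Tw; rewrite -mulmxA hy // !mulmxA hx.
- move=> x [xu hx]; split; first by rewrite unitmx_inv.
  move=> w Tw; have := hx w Tw => h.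
  symmetry; exact: (commrV (esym h)).
Qed.

Theorem mainTheorem6 (R : realType) (n : nat) (N : 'rV[R[i]]_n.+1 -> R)
  (G : seq 'M[R[i]]_n.+1) :
  is_norm N ->
  is_subgroup_GL (fun x => x \in G) ->
  (forall x, x \in G -> is_isometry N x) ->
  let M := fun x => x \in G /\ opnorm N (1%:M - x) < 1 / 2 in
  let A := generated M in
  (forall x y, A x -> A y -> x *m y = y *m x) /\
  (forall g x, g \in G -> A x -> A (invmx g *m x *m g)).
Proof.
move=> hN hG hI M A; have [h1 hu hm hv] := hG.
have AH1 : forall x, A x -> forall m, M m -> x *m m = m *m x.
  move=> x hx; have [|_ hc] := hx _ (cent_sub M); last exact: hc.
  move=> m [mG am]; split; first exact: hu.
  by move=> w [wG aw]; apply: (commM N G hN hG hI).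
split.
  move=> x y hx hy.
  have := hx _ (cent_sub A); case.
    by move=> m [mG am]; split; [exact: hu | move=> w Aw; apply/esym/AH1].
  by move=> _ ->.
move=> g x gG hx H hH hMH; have [H1 Hu Hm Hv] := hH.
have gu : g \is a GRing.unit by exact: hu.
pose H' := fun y => y \in unitmx /\ H (invmx g *m y *m g).
suff: H' x by case.
apply: hx; last first.
  move=> m [mG am]; split; first exact: hu.
  apply: hMH; split; first exact: (hm _ _ (hm _ _ (hv _ gG) mG) gG).
  have e : 1%:M - invmx g *m m *m g = invmx g *m (1%:M - m) *m g.
    rewrite !mulmxE -[invmx g]/(g^-1) mulrBr mulrBl mulr1 mulVr // idmxE.
  rewrite e.
  have [hb _] := bnd_opnorm _ _ hN (bnd_iso1 _ hN (hI m mG)).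
  have hb' : bnd N (invmx g *m (1%:M - m) *m g) (opnorm N (1%:M - m)).
    apply: bnd_isor; first exact: hI.
    by apply: bnd_isol => //; apply: hI; apply: hv.
  have [_ [hle _]] := bnd_opnorm _ _ hN hb'.
  exact: le_lt_trans hle am.
split.
- split; first exact: unitmx1.
  by rewrite mulmx1 mulVmx.
- by move=> y [].
- move=> y z [yu hy] [zu hz]; split; first by rewrite unitmx_mul yu.
  have e : invmx g *m (y *m z) *m g = (invmx g *m y *m g) *m (invmx g *m z *m g).
    rewrite !mulmxE -[invmx g]/(g^-1) !mulrA mulrK //.
  by rewrite e; apply: Hm.
- move=> y [yu hy]; split; first by rewrite unitmx_inv.
  have e : invmx g *m invmx y *m g = invmx (invmx g *m y *m g).
    rewrite !mulmxE -[invmx g]/(g^-1) -[invmx y]/(y^-1) -[invmx (_ * _)]/((_ * _)^-1).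
    rewrite invrM ?invrM ?invrK ?mulrA // ?unitrV ?unitrMr ?unitrV //.
  by rewrite e; apply: Hv.
Qed.
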